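(* A set of permutations $\{\pi_1,\dots,\pi_n\}\subseteq S_n$ such that $\mathrm{Des}(\pi_i)=\{i-1,i\}\cap[n-1]$ for all $i\in[n]$, or such that $\mathrm{Des}(\pi_i)=[n-1]\setminus\{i-1,i\}$ for all $i\in[n]$, is symmetric.
   Context: $\mathrm{Des}(w)=\{i\in[n-1]: w(i)>w(i+1)\}$. $F_{n,D}=\sum x_{i_1}\cdots x_{i_n}$ over $i_1\le\cdots\le i_n$ with $i_j<i_{j+1}$ whenever $j\in D$. A set $S\subseteq S_n$ is symmetric if $\sum_{w\in S}F_{n,\mathrm{Des}(w)}$ is a symmetric function. *)

(* Defs.v *)
From HB Require Import structures.
From mathcomp Require Import all_boot all_order all_algebra all_fingroup.
From mathcomp Require Import mpoly.
Set Implicit Arguments. Unset Strict Implicit. Unset Printing Implicit Defensive.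
Import GRing.Theory.
Local Open Scope ring_scope.

(* value w(j) of a permutation of 'I_n at a nat position j (0-indexed), 0 if out of range *)
Definition pval (n : nat) (w : 'S_n) (j : nat) : nat :=
  if insub j is Some k then val (w k) else 0%N.

(* Des(w) = { i in [n-1] : w(i) > w(i+1) }, positions 1-indexed:
   paper position i corresponds to ordinal i-1. *)
Definition Des (n : nat) (w : 'S_n) : pred nat :=
  fun i => [&& (0 < i)%N, (i < n)%N & (pval w i.-1 > pval w i)%N].

(* F_{n,D} restricted to the N variables x_1..x_N (here 'X_0..'X_(N-1)):
   sum of x_{i_1}...x_{i_n} over i_1 <= ... <= i_n with i_j < i_{j+1} for j in D
   (j 1-indexed; the 0-indexed tuple entry t (j-1) is i_j). *)
Definition admissible (n N : nat) (D : pred nat) (t : {ffun 'I_n -> 'I_N}) : bool :=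
  [forall j : 'I_n, forall k : 'I_n,
     (val k == (val j).+1) ==>
       if D (val k) then (val (t j) < val (t k))%N else (val (t j) <= val (t k))%N].

Definition Fund (N n : nat) (D : pred nat) : {mpoly int[N]} :=
  \sum_(t : {ffun 'I_n -> 'I_N} | admissible D t) \prod_(j < n) 'X_(t j).

(* A family of (bounded degree) quasisymmetric functions given by its restrictions
   f N to N variables (for every N) is symmetric iff every restriction is symmetric. *)
Definition sym_function (f : forall N : nat, {mpoly int[N]}) : Prop :=
  forall N : nat, f N \is symmetric.

Definition symmetric_set (n : nat) (S : {set 'S_n}) : Prop :=
  sym_function (fun N => \sum_(w in S) Fund N n (Des w)).

(* Main.v *)
Require Import Defs.
From mathcomp Require Import all_boot all_order all_algebra all_fingroup.
From mathcomp Require Import mpoly zify.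
Set Implicit Arguments. Unset Strict Implicit. Unset Printing Implicit Defensive.
Import GRing.Theory.



Section PartA.
Variables (n N : nat).
Implicit Types (t : {ffun 'I_n -> 'I_N}).

Definition leo : rel 'I_N := fun a b => (val a <= val b)%N.
Definition mnf t : bool :=
  [forall j : 'I_n, forall k : 'I_n, (j <= k)%N ==> (val (t j) <= val (t k))%N].
Definition mt t : 'X_{1..N} := (\sum_(j < n) U_(t j))%MM.

Lemma leo_trans : transitive leo.
Proof. by move=> a b c; apply: leq_trans. Qed.
Lemma leo_anti : antisymmetric leo.
Proof. by move=> a b /anti_leq /val_inj. Qed.
Lemma leo_total : total leo.
Proof. by move=> a b; apply: leq_total. Qed.

Lemma nth_codom_ord t (x0 : 'I_N) (j : 'I_n) : nth x0 (codom t) j = t j.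
Proof.
rewrite codomE (nth_map j) ?size_enum_ord ?ltn_ord //.
by rewrite nth_ord_enum.
Qed.

Lemma mnf_sorted t : mnf t = sorted leo (codom t).
Proof.
case: (posnP n) => [n0|n0].
  have -> : codom t = [::] by apply/size0nil; rewrite size_codom card_ord.
  by apply/forallP => j; have := ltn_ord j; rewrite {2}n0.
set x0 := t (Ordinal n0).
apply/idP/idP.
- move=> /forallP H.
  apply/(sortedP x0) => i; rewrite size_codom card_ord => hi.
  have hi' : (i < n)%N by apply: ltnW.
  have := nth_codom_ord t x0 (Ordinal hi).
  have := nth_codom_ord t x0 (Ordinal hi'); rewrite /= => -> ->.
  by move/forallP: (H (Ordinal hi')) => /(_ (Ordinal hi)) /implyP; apply => /=.
- move=> S; apply/forallP => j; apply/forallP => k; apply/implyP => jk.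
  have := sorted_leq_nth leo_trans (fun x => leqnn _) x0 S.
  move=> /(_ j k); rewrite !inE size_codom card_ord !ltn_ord !nth_codom_ord.
  by apply.
Qed.

Lemma mtE t v : mt t v = \sum_(j < n) (t j == v).
Proof. by rewrite /mt mnm_sumE; apply: eq_bigr => j _; rewrite mnm1E. Qed.

Lemma mt_count t v : mt t v = count_mem v (codom t).
Proof.
rewrite mtE codomE count_map -sum1_count [RHS]big_mkcond [RHS]big_enum /=.

by apply: eq_bigr => j _; case: (t j == v).
Qed.

Lemma mdeg_mt t : mdeg (mt t) = n.
Proof.
rewrite /mt mdeg_sum (eq_bigr (fun _ => 1%N)) => [|j _]; last exact: mdeg1.
by rewrite sum_nat_const card_ord muln1.
Qed.

Lemma prodX_mt t :
  (\prod_(j < n) ('X_(t j) : {mpoly int[N]}))%R = 'X_[mt t].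
Proof. by rewrite /mt (big_morph _ (@mpolyXD _ _) (@mpolyX0 _ _)). Qed.

Lemma mt_inj t1 t2 : mnf t1 -> mnf t2 -> mt t1 = mt t2 -> t1 = t2.
Proof.
rewrite !mnf_sorted => S1 S2 E.
have P : perm_eq (codom t1) (codom t2).
  by apply/allP => x _; rewrite /= -!mt_count E.
have C := sorted_eq leo_trans leo_anti S1 S2 P.
apply/ffunP => j; by rewrite -(nth_codom_ord t1 (t1 j)) C nth_codom_ord.
Qed.

Lemma mt_exists (mu : 'X_{1..N}) : mdeg mu = n -> exists2 t, mnf t & mt t = mu.
Proof.
move=> dmu.
set s0 := flatten [seq nseq (mu v) v | v <- enum 'I_N].
set s := sort leo s0.
have hs : size s == n.
  rewrite size_sort size_flatten /shape -map_comp sumnE big_map -dmu mdegE big_enum.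
  by apply/eqP/eq_bigr => v _ /=; rewrite size_nseq.
pose T := Tuple hs.
have Ec : codom [ffun j => tnth T j] = s.
  rewrite codomE (eq_map (g := tnth T)) => [|j]; last by rewrite ffunE.
  by rewrite map_tnth_enum.
exists [ffun j => tnth T j].
  by rewrite mnf_sorted Ec; apply: sort_sorted; apply: leo_total.
apply/mnmP => v; rewrite mt_count Ec.
have -> : count_mem v s = count_mem v s0.
  have P : perm_eq s s0 by rewrite /s perm_sort perm_refl.
  by move/seq.permP: P => ->.
rewrite count_flatten -map_comp sumnE big_map big_enum /=.
rewrite (bigD1 v) //= count_nseq /= eqxx mul1n big1 ?addn0 // => u /negbTE uv.
by rewrite count_nseq /= uv.
Qed.

Lemma coefL (c : {ffun 'I_n -> 'I_N} -> nat) (G : 'X_{1..N} -> nat)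
  (Hc : forall t, mnf t -> c t = G (mt t)) (mu : 'X_{1..N}) :
  mcoeff mu (\sum_(t | mnf t) ((c t)%:R : int) *: ('X_[mt t] : {mpoly int[N]}))%R
  = ((mdeg mu == n) * G mu)%:R%R.
Proof.
rewrite raddf_sum /=.
case: (pickP (fun t => mnf t && (mt t == mu))) => [t0 /andP[m0 /eqP e0] | none].
  rewrite (bigD1 t0) //= big1 => [|t /andP[mt1 ne]].
    by rewrite mcoeffZ mcoeffX e0 eqxx -e0 mdeg_mt eqxx Hc // mulr1 addr0 mul1n.
  rewrite mcoeffZ mcoeffX; case: eqP => [E|]; last by rewrite mulr0.
  by case/eqP: ne; apply: mt_inj => //; rewrite E e0.
rewrite big1 => [|t mt1]; last first.
  by rewrite mcoeffZ mcoeffX; have := none t; rewrite mt1 /= => ->; rewrite mulr0.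
case: eqP => [dmu|]; last by [].
by case: (mt_exists dmu) => t m1 e1; have := none t; rewrite m1 e1 eqxx.
Qed.

Lemma symA (c : {ffun 'I_n -> 'I_N} -> nat) (G : 'X_{1..N} -> nat)
  (HG : forall (s : 'S_N) (mu : 'X_{1..N}), G [multinom mu (s i) | i < N] = G mu)
  (Hc : forall t, mnf t -> c t = G (mt t)) :
  (\sum_(t | mnf t) ((c t)%:R : int) *: ('X_[mt t] : {mpoly int[N]}))%R \is symmetric.
Proof.
apply/issymP => s; apply/mpolyP => mu.
by rewrite mcoeff_sym !(coefL Hc) mdeg_mperm HG.
Qed.
End PartA.


Section PartB.
Variables (n N : nat).

Lemma adm_step (D : pred nat) (t : {ffun 'I_n -> 'I_N}) (j k : 'I_n) :
  admissible D t -> val k = (val j).+1 -> (val (t j) <= val (t k))%N.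
Proof.
move=> /forallP /(_ j) /forallP /(_ k) /implyP H E.
have := H (introT eqP E); case: (D k) => //; apply: ltnW.
Qed.

Lemma adm_mono (D : pred nat) (t : {ffun 'I_n -> 'I_N}) :
  admissible D t -> mnf t.
Proof.
move=> A; rewrite mnf_sorted.
case: (posnP n) => [n0|n0].
  by have -> : codom t = [::] by apply/size0nil; rewrite size_codom card_ord.
apply/(sortedP (t (Ordinal n0))) => i; rewrite size_codom card_ord => hi.
have hi' : (i < n)%N by apply: ltnW.
have := nth_codom_ord t (t (Ordinal n0)) (Ordinal hi).
have := nth_codom_ord t (t (Ordinal n0)) (Ordinal hi'); rewrite /= => -> ->.
exact: (adm_step (j := Ordinal hi') (k := Ordinal hi) A).
Qed.

Lemma partB (S : {set 'S_n}) :
  (\sum_(w in S) Fund N n (Des w))%R =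
  (\sum_(t : {ffun 'I_n -> 'I_N} | mnf t) ((\sum_(w in S) admissible (Des w) t)%N%:R : int) *: ('X_[mt t] : {mpoly int[N]}))%R.
Proof.
rewrite /Fund.
under eq_bigr do rewrite big_mkcond.
rewrite exchange_big /= (bigID (@mnf n N)) /= [X in (_ + X)%R]big1 ?addr0 => [|t nm]; last first.
  apply: big1 => w _; case: ifP => // /adm_mono; by rewrite (negbTE nm).
apply: eq_bigr => t mt1; rewrite prodX_mt natr_sum scaler_suml.
by apply: eq_bigr => w _; case: (admissible _ _); rewrite ?scale1r ?scale0r.
Qed.
End PartB.


Lemma cnt_gen (lo hi m : nat) :
  \sum_(i < m) ((lo <= i) && (i <= hi) : nat) = minn m hi.+1 - lo.
Proof.
elim: m => [|m IH]; first by rewrite big_ord0 min0n.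
rewrite big_ord_recr /= IH.
case: (leqP lo m) => h1; case: (leqP m hi) => h2 /=; lia.
Qed.

Section PartC.
Variables (n N : nat) (t : {ffun 'I_n -> 'I_N}).

Definition Eset : {set 'I_n} := [set j | [exists k, (k != j) && (t k == t j)]].
Definition Wset (i : 'I_n) : {set 'I_n} := [set j : 'I_n | (i <= j.+1) && (j <= i.+1)].
Definition eps (mu : 'X_{1..N}) : nat := \sum_(v < N) (1 < mu v) * mu v.

Lemma mnf_le : mnf t -> forall j k : 'I_n, j <= k -> t j <= t k.
Proof. by move=> /forallP H j k jk; move/forallP: (H j) => /(_ k) /implyP; apply. Qed.

Lemma mnf_eq : mnf t -> forall a c b : 'I_n, a <= c -> c <= b -> t a = t b -> t c = t a.
Proof.
move=> M a c b ac cb e; apply/val_inj/eqP; rewrite eqn_leq.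
have := mnf_le M ac; have := mnf_le M cb; rewrite -e => -> ->; by [].
Qed.

Lemma inE_ j : (j \in Eset) = [exists k, (k != j) && (t k == t j)].
Proof. by rewrite inE. Qed.

Lemma sum_by_val (F : 'I_N -> nat) :
  \sum_(j < n) F (t j) = \sum_(v < N) mt t v * F v.
Proof.
rewrite (partition_big (fun j => t j) predT) //=.
apply: eq_bigr => v _; rewrite mtE big_distrl /= big_mkcond /=.
by apply: eq_bigr => j _; case: eqP => [->|]; rewrite ?mul1n ?mul0n.
Qed.

Lemma inE_mt j : (j \in Eset) = (1 < mt t (t j)).
Proof.
rewrite inE mtE (bigD1 j) //= eqxx add1n ltnS lt0n.
apply/existsP/idP => [[k /andP[kj tk]]|].
  by rewrite (bigD1 k) //= tk.
move=> H; apply/existsP; apply: contraNT H => /existsPn N0.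
rewrite big1 // => k kj; have := N0 k; rewrite kj /=; by case: (t k == t j).
Qed.

Lemma card_E : #|Eset| = eps (mt t).
Proof.
rewrite -sum1_card big_mkcond /=.
rewrite (eq_bigr (fun j => (fun v => (1 < mt t v) : nat) (t j))) => [|j _]; last first.
  by rewrite inE_mt; case: (1 < _).
rewrite (sum_by_val (fun v => (1 < mt t v) : nat)) /eps; apply: eq_bigr => v _; by rewrite mulnC.
Qed.

Definition KK (i : 'I_n) (x : nat) := (x == val i) || (x == (val i).+1).
Definition DD (b : bool) (i : 'I_n) : pred nat := fun x => [&& 0 < x, x < n & b (+) KK i x].

Lemma notE i : i \notin Eset -> forall k, k != i -> t k != t i.
Proof.
move=> NE k ki; apply/negP => /eqP tk; move: NE; rewrite inE => /existsP; apply.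
by exists k; rewrite ki tk eqxx.
Qed.

Lemma admE D : admissible D t = [forall j : 'I_n, forall k : 'I_n, (val k == (val j).+1) ==>
       if D (val k) then (val (t j) < val (t k)) else (val (t j) <= val (t k))].
Proof. by []. Qed.

Lemma C1 (i : 'I_n) : mnf t -> admissible (DD false i) t = (i \notin Eset).
Proof.
move=> M; apply/idP/idP.
- move=> A; apply/negP; rewrite inE => /existsP [k /andP[ki /eqP tk]].
  move: A; rewrite admE => A.
  case: (ltngtP k i) => [lt|gt|eq]; last by case/eqP: ki; apply: val_inj.
  + have hp : i.-1 < n by apply: leq_ltn_trans (leq_pred _) (ltn_ord i).
    pose p := Ordinal hp.
    move/forallP: A => /(_ p) /forallP /(_ i) /implyP.
    rewrite /= prednK; last by apply: leq_ltn_trans lt.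
    move=> /(_ (eqxx _)); rewrite /DD /KK eqxx ltn_ord /=.
    have : t k <= t p by apply: (mnf_le M) => /=; lia.
    have i0 : 0 < i by lia.
    rewrite tk i0 /=; lia.
  + have hq : i.+1 < n by apply: leq_ltn_trans gt (ltn_ord k).
    pose q := Ordinal hq.
    move/forallP: A => /(_ i) /forallP /(_ q) /implyP /= /(_ (eqxx _)).
    rewrite /DD /KK hq eqxx orbT /=.
    have : t q <= t k by apply: (mnf_le M) => /=; lia.
    rewrite tk; lia.
- move=> NE; rewrite admE; apply/forallP => j; apply/forallP => k; apply/implyP => /eqP /= kj.
  have le : t j <= t k by apply: (mnf_le M); lia.
  case: ifP => [D|_] //; rewrite ltn_neqAle le andbT.
  move: D; rewrite /DD /KK /= => /andP[_ /andP[_ /orP[/eqP ki|/eqP ki]]].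
  + have ji : j != i by apply/eqP => ji; move: kj ki; rewrite ji => ->; lia.
    have := notE NE ji; have -> : k = i by apply: val_inj.
    by apply: contra => /eqP e; apply/eqP/val_inj.
  + have ji : j = i by apply: val_inj; move: kj ki => /= -> [] ->.
    have ki' : k != i by apply/eqP => e; move: ki; rewrite e; lia.
    have := notE NE ki'; rewrite ji eq_sym.
    by apply: contra => /eqP e; apply/eqP/val_inj.
Qed.

Lemma inEP j k : k != j -> t k = t j -> j \in Eset.
Proof. by move=> kj tk; rewrite inE; apply/existsP; exists k; rewrite kj tk eqxx. Qed.

Lemma C2 (i : 'I_n) : mnf t -> admissible (DD true i) t = (Eset \subset Wset i).
Proof.
move=> M; apply/idP/idP.
- move=> A; apply/subsetP => j; rewrite inE => /existsP [k /andP[kj /eqP tk]].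
  rewrite inE; move: A; rewrite admE => A.
  case: (ltngtP j k) => [lt|gt|eq]; last by case/eqP: kj; apply: val_inj.
  + have hq : j.+1 < n by apply: leq_ltn_trans lt (ltn_ord k).
    pose q := Ordinal hq.
    have tq : t q = t j by apply: (mnf_eq M (b := k)) => //=; lia.
    move/forallP: A => /(_ j) /forallP /(_ q) /implyP /= /(_ (eqxx _)).
    rewrite tq ltnn /DD /KK /= hq /=.
    by case: ifP => // /negbFE /orP[] /eqP H _; lia.
  + have hp : j.-1 < n by apply: leq_ltn_trans (leq_pred _) (ltn_ord j).
    pose p := Ordinal hp.
    have tp : t p = t k by apply: (mnf_eq M (b := j)) => //=; lia.
    move/forallP: A => /(_ p) /forallP /(_ j) /implyP /=.
    rewrite prednK; last by apply: leq_ltn_trans gt.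
    move=> /(_ (eqxx _)); rewrite tp tk ltnn /DD /KK /= ltn_ord /=.
    have j0 : 0 < j by lia.
    rewrite j0 /=.
    by case: ifP => // /negbFE /orP[] /eqP H _; lia.
- move=> S; rewrite admE; apply/forallP => j; apply/forallP => k; apply/implyP => /eqP /= kj.
  have le : t j <= t k by apply: (mnf_le M); lia.
  case: ifP => [D|_] //; rewrite ltn_neqAle le andbT.
  apply/negP => /eqP e.
  have ej : j \in Eset by apply: (inEP (k := k)); [apply/eqP => E; move: kj; rewrite E; lia | apply: val_inj].
  have ek : k \in Eset by apply: (inEP (k := j)); [apply/eqP => E; move: kj; rewrite E; lia | apply: val_inj].
  move/subsetP: S => S; move: (S _ ej) (S _ ek) D; rewrite !inE /DD /KK /=.
  move=> /andP[h1 h2] /andP[h3 h4] /andP[_ /andP[_]].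
  case: eqP => [//|?]; case: eqP => [//|?] _; lia.
Qed.

Lemma sum_in (A : {set 'I_n}) : \sum_(i < n) (i \in A : nat) = #|A|.
Proof. by rewrite -sum1_card [RHS]big_mkcond; apply: eq_bigr => i _; case: (i \in A). Qed.

Lemma Count1 : \sum_(i < n) (i \notin Eset : nat) = n - #|Eset|.
Proof.
have : \sum_(i < n) (i \in Eset : nat) + \sum_(i < n) (i \notin Eset : nat) = n.
  rewrite -big_split /= (eq_bigr (fun _ => 1)) => [|i _]; last by case: (i \in Eset).
  by rewrite sum_nat_const card_ord muln1.
rewrite sum_in; lia.
Qed.

Definition hh (k : nat) := if k == 0 then n else 4 - k.

Lemma Count2 : mnf t -> \sum_(i < n) (Eset \subset Wset i : nat) = hh #|Eset|.
Proof.
move=> M; case: (posnP #|Eset|) => [E0|Epos].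
  rewrite /hh E0 /=.
  have -> : Eset = set0 by apply/eqP; rewrite -cards_eq0 E0.
  rewrite (eq_bigr (fun _ => 1)) => [|i _]; last by rewrite sub0set.
  by rewrite sum_nat_const card_ord muln1.
case/card_gt0P: Epos => x0 x0E.
case: (@arg_minnP _ x0 (fun j => j \in Eset) (fun j => val j) x0E) => a aE amin.
case: (@arg_maxnP _ x0 (fun j => j \in Eset) (fun j => val j) x0E) => b bE bmax.
have [p /andP[pa /eqP tp]] : exists p, (p != a) && (t p == t a).
  by apply/existsP; move: aE; rewrite inE.
have pE : p \in Eset by apply: (inEP (k := a)); [rewrite eq_sym | rewrite tp].
have ap : a < p by move: (amin p pE) pa; rewrite leq_eqVlt => /orP[/eqP/val_inj ->|//]; rewrite eqxx.
have pb : p <= b by apply: bmax.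
case: (eqVneq (t a) (t b)) => [tab | tab].
- have Echar : forall j, (j \in Eset) = (a <= j <= b).
    move=> j; apply/idP/idP => [jE|/andP[aj jb]]; first by rewrite amin //; apply: (bmax _ jE).
    have tj : t j = t a by apply: (mnf_eq M (b := b)).
    case: (eqVneq j a) => [->|ja]; last by apply: (inEP (k := a)); [rewrite eq_sym | rewrite tj].
    by apply: (inEP (k := b)); [apply/eqP => E; move: ap pb; rewrite -E; lia | rewrite tab].
  have cardE : #|Eset| = b.+1 - a.
    rewrite -sum_in (eq_bigr (fun i : 'I_n => ((a <= i) && (i <= b) : nat))) => [|i _]; last by rewrite Echar.
    rewrite cnt_gen; have := ltn_ord b; lia.
  have sub : forall i : 'I_n, (Eset \subset Wset i) = ((b.-1 <= i) && (i <= a.+1)).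
    move=> i; apply/idP/idP.
    + move/subsetP => S; move: (S _ aE) (S _ bE); rewrite !inE; lia.
    + move=> H; apply/subsetP => j; rewrite Echar inE; lia.
  rewrite (eq_bigr (fun i : 'I_n => ((b.-1 <= i) && (i <= a.+1) : nat))) => [|i _]; last by rewrite sub.
  rewrite cnt_gen cardE /hh; have := ltn_ord b; case: ifP; lia.
- have [q /andP[qb /eqP tq]] : exists q, (q != b) && (t q == t b).
    by apply/existsP; move: bE; rewrite inE.
  have qE : q \in Eset by apply: (inEP (k := b)); [rewrite eq_sym | rewrite tq].
  have aq : a <= q by apply: amin.
  have qb1 : q <= b := bmax q qE.
  have qb' : q < b by move: qb1 qb; rewrite leq_eqVlt => /orP[/eqP/val_inj ->|//]; rewrite eqxx.
  have neq : forall x y : 'I_n, t x != t y -> x != y by move=> x y; apply: contra => /eqP ->.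
  have pq : p != q by apply: neq; rewrite tp tq.
  have pb' : p != b by apply: neq; rewrite tp.
  have aq' : a != q by apply: neq; rewrite tq.
  rewrite big1 => [|i _].
    have : size [:: a; p; b; q] <= size (enum Eset).
      apply: uniq_leq_size => [|x]; last by rewrite !inE mem_enum => /or4P[] /eqP ->.
      have ap' : a != p by rewrite eq_sym.
      have bq : b != q by rewrite eq_sym.
      have ab : a != b by apply: neq.
      by rewrite /= !inE !negb_or ap' ab aq' pb' pq bq.
    rewrite -cardE /hh /= => sz; case: ifP => /eqP h; clear -sz h; lia.
  apply/eqP; rewrite eqb0; apply/negP => /subsetP S.
  move: (S _ aE) (S _ bE) (S _ pE) (S _ qE); rewrite !inE => h1 h2 h3 h4.
  have pb2 : (p : nat) != b by [].
  have pq2 : (p : nat) != q by [].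
  have aq2 : (a : nat) != q by [].
  have pb3 : p < b by rewrite ltn_neqAle pb2 pb.
  have aq3 : a < q by rewrite ltn_neqAle aq2 aq.
  move: pq2; rewrite neq_ltn => /orP[] H; clear -H h1 h2 h3 h4 ap pb3 aq3 qb'; lia.
Qed.
End PartC.


Lemma eps_perm N (s : 'S_N) (mu : 'X_{1..N}) : eps [multinom mu (s i) | i < N] = eps mu.
Proof.
rewrite /eps [RHS](reindex_inj (@perm_inj _ s)) /=.
by apply: eq_bigr => v _; rewrite mnmE.
Qed.

Lemma adm_ext n N (D1 D2 : pred nat) (t : {ffun 'I_n -> 'I_N}) :
  D1 =1 D2 -> admissible D1 t = admissible D2 t.
Proof.
move=> H; rewrite !admE; apply: eq_forallb => j; apply: eq_forallb => k.
by rewrite H.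
Qed.

Lemma DD_inj n b (i i' : 'I_n) : n != 2 -> DD b i =1 DD b i' -> i = i'.
Proof.
move=> /eqP n2 E; apply/val_inj/eqP; apply/negPn/negP => ne.
wlog lt : i i' E ne / i < i'.
  move=> W; case: (ltngtP i i') => h; first exact: (W i i').
    by apply: (W i' i) => [x||]; [rewrite E | rewrite eq_sym | ].
  by move: ne; rewrite /= h eqxx.
have := ltn_ord i'; have := ltn_ord i => hi hi'.
have n3 : 3 <= n by move: n2 hi hi' lt; clear; lia.
case: (ltnP i'.+1 n) => h.
  move: (E i'.+1); rewrite /DD /KK h /= eqSS.
  have -> : (i'.+1 == i) = false by apply/eqP; lia.
  have -> : (i' == i :> nat) = false by apply/eqP; lia.
  have -> : (i'.+1 == i') = false by apply/eqP; lia.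
  by rewrite eqxx; clear E; case: b.
case: (eqVneq (i' : nat).-1 (i : nat)) => h2.
  move: (E i); rewrite /DD /KK hi /=.
  have -> : (0 < i) = true by apply/idP; lia.
  have -> : (i == i' :> nat) = false by apply/eqP; lia.
  have -> : ((i : nat) == i'.+1) = false by apply/eqP; lia.
  by rewrite eqxx; clear E; case: b.
move: (E i'); rewrite /DD /KK hi' /=.
have -> : (0 < i') = true by apply/idP; lia.
have -> : (i' == i :> nat) = false by apply/eqP; lia.
have -> : ((i' : nat) == i.+1) = false by apply/eqP; move: h2 => /eqP; lia.
by rewrite eqxx; clear E; case: b.
Qed.

Lemma pval_ord n (w : 'S_n) (k : 'I_n) : Defs.pval w k = val (w k).
Proof. by rewrite /Defs.pval; have -> : insub (k : nat) = Some k := valK k. Qed.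

Lemma perm2_val (w : 'S_2) :
  val (w ord0) = (val (w ord_max) < val (w ord0)) :> nat /\
  val (w ord_max) = ~~ (val (w ord_max) < val (w ord0)) :> nat.
Proof.
have d : val (w ord0) != val (w ord_max) by rewrite (inj_eq val_inj) (inj_eq perm_inj).
have := ltn_ord (w ord0); have := ltn_ord (w ord_max); move: d.
case: (w ord0) => [a ha]; case: (w ord_max) => [c hc] /=.
by case: a ha => [|[|?]] ?; case: c hc => [|[|?]] ?.
Qed.

Lemma perm2 (w1 w2 : 'S_2) :
  (val (w1 ord_max) < val (w1 ord0)) = (val (w2 ord_max) < val (w2 ord0)) -> w1 = w2.
Proof.
move=> E; case: (perm2_val w1) => a1 b1; case: (perm2_val w2) => a2 b2.
apply/permP => x; apply/val_inj.
case: x => [[|[|//]]] hx.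
  have -> : Ordinal hx = ord0 by apply: val_inj.
  by rewrite a1 a2 E.
have -> : Ordinal hx = ord_max by apply: val_inj.
by rewrite b1 b2 E.
Qed.


Theorem proposition4p15 (n : nat) (pi : 'I_n -> 'S_n) :
  ((forall (i : 'I_n) (j : nat),
       Des (pi i) j = [&& (0 < j)%N, (j < n)%N & ((j == val i) || (j == (val i).+1))])
   \/
   (forall (i : 'I_n) (j : nat),
       Des (pi i) j = [&& (0 < j)%N, (j < n)%N & ~~ ((j == val i) || (j == (val i).+1))])) ->
  symmetric_set [set pi i | i : 'I_n].
Proof.
move=> H.
have [b Hb] : exists b : bool, forall i, Des (pi i) =1 DD b i.
  by case: H => H; [exists false | exists true] => i x; rewrite H /DD /KK.
set S := [set pi i | i : 'I_n].
pose base k := if b then hh n k else n - k.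
pose phi k := if n == 2 then (base k)./2 else base k.
have msum : forall N (t : {ffun 'I_n -> 'I_N}), mnf t ->
    \sum_(i < n) admissible (Des (pi i)) t = base (eps (mt t)).
  move=> N t M.
  rewrite (eq_bigr (fun i => admissible (DD b i) t : nat)) => [|i _]; last by rewrite (adm_ext _ (Hb i)).
  rewrite -card_E /base; case: b {Hb base phi} => /=.
  - rewrite (eq_bigr (fun i => (Eset t \subset Wset i : nat))) => [|i _]; last by rewrite C2.
    exact: Count2.
  - rewrite (eq_bigr (fun i => (i \notin Eset t : nat))) => [|i _]; last by rewrite C1.
    exact: Count1.
have ssum : forall N (t : {ffun 'I_n -> 'I_N}),
    \sum_(w in S) admissible (Des w) t =
    if n == 2 then (\sum_(i < n) admissible (Des (pi i)) t)./2
    else \sum_(i < n) admissible (Des (pi i)) t.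
  move=> N t; case: eqP => [n2|n2].
    subst n.
    have p01 : pi ord0 = pi ord_max.
      apply: perm2; have := Hb ord0 1; have := Hb ord_max 1.
      rewrite /Des /DD /KK /= (pval_ord _ ord0) (pval_ord _ ord_max) (pval_ord _ ord0) (pval_ord _ ord_max).
      by move=> -> ->.
    have -> : S = [set pi ord0].
      apply/setP => w; rewrite inE; apply/imsetP/eqP => [[i _ ->]|->]; last by exists ord0.
      case: i => [[|[|//]]] hi.
        by congr (pi _); apply: val_inj.
      by rewrite p01; congr (pi _); apply: val_inj.
    rewrite big_set1 big_ord_recr big_ord1 /=.
    have -> : widen_ord (leqnSn 1) ord0 = ord0 :> 'I_2 by apply: val_inj.
    by rewrite -p01 addnn doubleK.
  rewrite big_imset /=; last first.
    move=> i i' _ _ e; apply: (@DD_inj n b); first by apply/eqP.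
    by move=> x; rewrite -!Hb e.
  by [].
rewrite /symmetric_set /sym_function => N /=.
rewrite partB.
apply: (symA (G := fun mu => phi (eps mu))).
  by move=> s mu; rewrite eps_perm.
by move=> t M; rewrite ssum msum.
Qed.
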